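(* Let $\phi\in(\pi,2\pi)$ and $l>0$. For $r=l+\epsilon$ with $\epsilon>0$ sufficiently small, $$\sum_{k=3,4}\mathbf 1(C_k(\phi,l,r))\,g_k(\phi,l,r)=\mathbf 1(C_{34}(\phi,l,r))\,g_4(\phi,l,r).$$
   Context: Conditions: $C_3(\phi,l,r)$: $3\pi/2<\phi<2\pi$ and $l|\sin\phi|\le r$; $C_4(\phi,l,r)$: $\pi<\phi\le3\pi/2$ and $l\le r$; $C_{34}=C_3\cup C_4$; $\mathbf1$ is the indicator. With $\arcsin\in[-\pi/2,\pi/2]$, $[t]^+=\max(t,0)$, and all quantities evaluated at $(\phi,l,r)$: $\gamma=l\sin(2\pi-\phi)/r$, $\zeta_1=\phi-\pi-\arcsin\gamma$, $\zeta_2=\phi-\pi-(\pi-\arcsin\gamma)$, $g_{3,1}=-2\gamma^2+\frac{1}{\tan\phi}(2\arcsin\gamma-2\gamma\sqrt{1-\gamma^2})$, $g_{3,2}=\frac{1}{\tan\phi}(-2(-\arcsin\gamma-\phi+2\pi)-2\gamma\sqrt{1-\gamma^2}-\sin2\phi)-1+2\gamma^2+\cos2\phi$, $g_{3,3}=\frac{l^2\sin\phi}{2}(\zeta_1\cos\phi-\sin\phi(\log|\sin\phi|-\log\gamma))$, $g_{3,4}=\frac{l^2\sin\phi}{2}(\pi-2\arcsin\gamma)\cos\phi$, $g_3=lr(\cos([\zeta_2]^+)-\cos\zeta_1)-\frac{r^2}{8}g_{3,1}+(-\frac{r^2}{8}g_{3,2}+g_{3,4})\mathbf1(\zeta_2>0)+g_{3,3}\mathbf1(\zeta_2\le0)$,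 $g_4=lr(1-\cos\zeta_1)-\frac{r^2}{8}g_{3,1}+g_{3,3}$. *)

(* Defs.v *)
From Stdlib Require Import Reals Lra ClassicalEpsilon.
Open Scope R_scope.

Definition indic (P : Prop) : R :=
  if excluded_middle_informative P then 1 else 0.

Definition pos_part (t : R) : R := Rmax t 0.

(* 1/tan phi, read as cot phi = cos phi / sin phi (well defined for sin phi <> 0) *)
Definition cot (phi : R) : R := cos phi / sin phi.

Definition Cond3 (phi l r : R) : Prop :=
  3 * PI / 2 < phi < 2 * PI /\ l * Rabs (sin phi) <= r.
Definition Cond4 (phi l r : R) : Prop :=
  PI < phi <= 3 * PI / 2 /\ l <= r.
Definition Cond34 (phi l r : R) : Prop := Cond3 phi l r \/ Cond4 phi l r.

Definition gam (phi l r : R) : R := l * sin (2 * PI - phi) / r.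
Definition zeta1 (phi l r : R) : R := phi - PI - asin (gam phi l r).
Definition zeta2 (phi l r : R) : R := phi - PI - (PI - asin (gam phi l r)).

Definition g31 (phi l r : R) : R :=
  let g := gam phi l r in
  - 2 * g ^ 2 + cot phi * (2 * asin g - 2 * g * sqrt (1 - g ^ 2)).

Definition g32 (phi l r : R) : R :=
  let g := gam phi l r in
  cot phi * (- 2 * (- asin g - phi + 2 * PI) - 2 * g * sqrt (1 - g ^ 2) - sin (2 * phi))
  - 1 + 2 * g ^ 2 + cos (2 * phi).

Definition g33 (phi l r : R) : R :=
  l ^ 2 * sin phi / 2 *
  (zeta1 phi l r * cos phi - sin phi * (ln (Rabs (sin phi)) - ln (gam phi l r))).

Definition g34 (phi l r : R) : R :=
  l ^ 2 * sin phi / 2 * (PI - 2 * asin (gam phi l r)) * cos phi.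

Definition g3 (phi l r : R) : R :=
  l * r * (cos (pos_part (zeta2 phi l r)) - cos (zeta1 phi l r))
  - r ^ 2 / 8 * g31 phi l r
  + (- (r ^ 2 / 8) * g32 phi l r + g34 phi l r) * indic (zeta2 phi l r > 0)
  + g33 phi l r * indic (zeta2 phi l r <= 0).

Definition g4 (phi l r : R) : R :=
  l * r * (1 - cos (zeta1 phi l r)) - r ^ 2 / 8 * g31 phi l r + g33 phi l r.

(* Main.v *)
Require Import Defs.
From Stdlib Require Import Reals Lra ClassicalEpsilon.
Open Scope R_scope.

Theorem lemma2 (phi l : R) :
  PI < phi < 2 * PI -> 0 < l ->
  exists eps0 : R, 0 < eps0 /\
    forall eps : R, 0 < eps < eps0 ->
      let r := l + eps in
      indic (Cond3 phi l r) * g3 phi l r + indic (Cond4 phi l r) * g4 phi l r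
      = indic (Cond34 phi l r) * g4 phi l r.
Proof.
  intros Hphi Hl. exists 1. split; [lra|]. intros eps Heps r.
  assert (Hr : l < r) by (unfold r; lra).
  destruct (Rle_dec phi (3 * PI / 2)) as [H4|H3].
  - assert (HC4 : Cond4 phi l r) by (unfold Cond4; lra).
    assert (HC3 : ~ Cond3 phi l r) by (unfold Cond3; lra).
    assert (HC34 : Cond34 phi l r) by (right; exact HC4).
    unfold indic.
    destruct (excluded_middle_informative (Cond3 phi l r)); [contradiction|].
    destruct (excluded_middle_informative (Cond4 phi l r)); [|contradiction].
    destruct (excluded_middle_informative (Cond34 phi l r)); [|contradiction].
    ring.
  - assert (HC4 : ~ Cond4 phi l r) by (unfold Cond4; lra).
    assert (Hs := SIN_bound phi).
    assert (HC3 : Cond3 phi l r).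
    { unfold Cond3. split; [lra|].
      apply Rle_trans with (l * 1); [|lra].
      apply Rmult_le_compat_l; [lra|]. apply Rabs_le. lra. }
    assert (HC34 : Cond34 phi l r) by (left; exact HC3).
    set (th := 2 * PI - phi).
    assert (Hth : 0 < th < PI / 2) by (unfold th; lra).
    assert (Hsth : 0 < sin th) by (apply sin_gt_0; lra).
    assert (Hsth1 := SIN_bound th).
    assert (Hg : 0 < gam phi l r < sin th).
    { unfold gam. fold th. split.
      - apply Rdiv_lt_0_compat; [apply Rmult_lt_0_compat|]; lra.
      - apply Rmult_lt_reg_r with r; [lra|].
        unfold Rdiv. rewrite Rmult_assoc, Rinv_l by lra.
        rewrite Rmult_1_r, (Rmult_comm l). apply Rmult_lt_compat_l; lra. }
    assert (Hg1 : -1 <= gam phi l r <= 1) by lra.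
    assert (Has : asin (gam phi l r) < th).
    { destruct (Rtotal_order (asin (gam phi l r)) th) as [h|[h|h]]; auto.
      - exfalso. rewrite <- h in Hg. rewrite sin_asin in Hg by exact Hg1. lra.
      - exfalso. assert (sin th < sin (asin (gam phi l r))).
        { apply sin_increasing_1; try lra.
          all: pose proof (asin_bound (gam phi l r)); lra. }
        rewrite sin_asin in H by exact Hg1. lra. }
    assert (Hz : zeta2 phi l r <= 0) by (unfold zeta2, th in *; lra).
    assert (Hp : pos_part (zeta2 phi l r) = 0) by (unfold pos_part; apply Rmax_right; lra).
    unfold g3, g4. rewrite Hp, cos_0.
    unfold indic.
    destruct (excluded_middle_informative (Cond3 phi l r)); [|contradiction].
    destruct (excluded_middle_informative (Cond4 phi l r)); [contradiction|].
    destruct (excluded_middle_informative (Cond34 phi l r)); [|contradiction].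
    destruct (excluded_middle_informative (zeta2 phi l r > 0)); [lra|].
    destruct (excluded_middle_informative (zeta2 phi l r <= 0)); [|contradiction].
    ring.
Qed.
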